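(* Let $p$ be an odd prime, $m\ge1$ and $n\ge 2$ integers such that $p$ divides $|\mathrm{GL}_m(\mathbb{Z}/2\mathbb{Z})|$. Let $P\in\mathrm{GL}_m(\mathbb{Z}/2\mathbb{Z})$ have order $p$, and let $E\in\mathrm{GL}_n(\mathbb{Z}/p\mathbb{Z})$ be a non-identity diagonal matrix with diagonal entries $(1,\epsilon_2,\dots,\epsilon_n)$, $\epsilon_i\in\{-1,1\}$. On $A = (\mathbb{Z}/2\mathbb{Z})^m\times(\mathbb{Z}/p\mathbb{Z})^n$ (column vectors) define \[ (u,v)\cdot(x,y) = (u + P^{v_1}x,\ v+y),\qquad (u,v)\circ(x,y) = (u+x,\ v + E^{u_1}y), \] where $u=(u_1,\dots,u_m)^T$, $v=(v_1,\dots,v_n)^T$. Then $(A,\cdot,\circ)$ is a skew brace, and if there exists $w\in\mathbb{Z}/p\mathbb{Z}$ such that $P^{w}-I_m$ has a non-zero entry in its first row, then $A$ is not meta-trivial.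
   Context: A skew brace is a set $A$ with two group operations $\cdot$ and $\circ$ such that $a\circ(b\cdot c) = (a\circ b)\cdot a^{-1}\cdot(a\circ c)$ for all $a,b,c$, where $a^{-1}$ is the inverse in $(A,\cdot)$. Define $a*b = a^{-1}\cdot(a\circ b)\cdot b^{-1}$ and let $A'$ be the subgroup of $(A,\cdot)$ generated by all $a*b$. $A$ is meta-trivial if $x\circ y = x\cdot y$ for all $x,y\in A'$. *)

(* Defs.v *)
From HB Require Import structures.
From mathcomp Require Import all_boot all_order all_algebra all_fingroup.
Set Implicit Arguments. Unset Strict Implicit. Unset Printing Implicit Defensive.
Import GRing.Theory.
Local Open Scope ring_scope.

Definition group_axioms (T : Type) (op : T -> T -> T) (e : T) (inv : T -> T) :=
  [/\ forall x y z, op x (op y z) = op (op x y) z,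
      forall x, op e x = x /\ op x e = x &
      forall x, op x (inv x) = e /\ op (inv x) x = e].

Definition skew_brace (T : Type) (dot circ : T -> T -> T) : Prop :=
  exists (e : T) (inv : T -> T),
    [/\ group_axioms dot e inv,
        (exists (e' : T) (inv' : T -> T), group_axioms circ e' inv') &
        forall a b c, circ a (dot b c) = dot (dot (circ a b) (inv a)) (circ a c)].

Definition sb_star (T : Type) (dot circ : T -> T -> T) (inv : T -> T) (a b : T) : T :=
  dot (dot (inv a) (circ a b)) (inv b).

Inductive in_Aprime (T : Type) (dot circ : T -> T -> T) (e : T) (inv : T -> T)
  : T -> Prop :=
| Ap_gen a b : in_Aprime dot circ e inv (sb_star dot circ inv a b)
| Ap_one : in_Aprime dot circ e inv e
| Ap_mul x y : in_Aprime dot circ e inv x -> in_Aprime dot circ e inv y ->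
               in_Aprime dot circ e inv (dot x y)
| Ap_inv x : in_Aprime dot circ e inv x -> in_Aprime dot circ e inv (inv x).

(** Meta-trivial: x o y = x . y for all x, y in A'.  (The identity and inverse
    of a group law are unique, so quantifying over them is harmless.) *)
Definition meta_trivial (T : Type) (dot circ : T -> T -> T) : Prop :=
  forall (e : T) (inv : T -> T), group_axioms dot e inv ->
    forall x y, in_Aprime dot circ e inv x -> in_Aprime dot circ e inv y ->
      circ x y = dot x y.

(** First coordinate of a column vector (meaningful for n >= 1). *)
Definition coord1 (R : nmodType) (n : nat) (v : 'cV[R]_n) : R :=
  \sum_(i < n | val i == 0%N) v i 0.

Definition brace_dot (p m n : nat) (P : 'M['F_2]_m)
  (a b : 'cV['F_2]_m * 'cV['F_p]_n) : 'cV['F_2]_m * 'cV['F_p]_n :=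
  (a.1 + P ^+ (nat_of_ord (coord1 a.2)) *m b.1, a.2 + b.2).

Definition brace_circ (p m n : nat) (E : 'M['F_p]_n)
  (a b : 'cV['F_2]_m * 'cV['F_p]_n) : 'cV['F_2]_m * 'cV['F_p]_n :=
  (a.1 + b.1, a.2 + E ^+ (nat_of_ord (coord1 a.1)) *m b.2).

(* Main.v *)
Require Import Defs.
From HB Require Import structures.
From mathcomp Require Import all_boot all_order all_algebra all_fingroup.
From mathcomp Require Import ring.
Import GRing.Theory.
Local Open Scope ring_scope.

Lemma F2_addxx m' n' (u : 'M['F_2]_(m', n')) : u + u = 0.
Proof. apply/matrixP=> i j; rewrite !mxE; have := pchar_Fp (isT : prime 2); move/addrr_pchar2; apply. Qed.

Lemma exp_modn (R : pzRingType) (M : R) q k : M ^+ q = 1 -> M ^+ k = M ^+ (k %% q).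
Proof. by move=> h; rewrite {1}(divn_eq k q) exprD mulnC exprM h expr1n mul1r. Qed.

Lemma Fp_expD p (R : pzRingType) (M : R) (a b : 'F_p) :
  prime p -> M ^+ p = 1 -> M ^+ (nat_of_ord ((a + b)%R : 'F_p)) = M ^+ a * M ^+ b.
Proof. move=> hp h; rewrite -exprD [in RHS](@exp_modn _ _ _ _ h) /=; congr (M ^+ (_ %% _)); exact: Fp_cast. Qed.

Lemma coord1D (R : nmodType) n (u v : 'cV[R]_n) : coord1 (u + v) = coord1 u + coord1 v.
Proof. by rewrite /coord1 -big_split; apply: eq_bigr => i _; rewrite mxE. Qed.

Lemma coord1N (R : zmodType) n (v : 'cV[R]_n) : coord1 (- v) = - coord1 v.
Proof. by rewrite /coord1 -sumrN; apply: eq_bigr => i _; rewrite mxE. Qed.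

Lemma coord10 (R : nmodType) n : coord1 (0 : 'cV[R]_n) = 0.
Proof. by rewrite /coord1 big1 // => i _; rewrite mxE. Qed.

Lemma coord1E (R : nmodType) n (i0 : 'I_n) (v : 'cV[R]_n) : val i0 = 0%N -> coord1 v = v i0 0.
Proof.
move=> h; rewrite /coord1 (big_pred1 i0) // => i /=.
by rewrite -(inj_eq val_inj) h.
Qed.

Lemma coord1_diag (R : pzRingType) n (d : 'rV[R]_n) (y : 'cV[R]_n) k :
  (forall i : 'I_n, val i = 0%N -> d 0 i = 1) ->
  coord1 (diag_mx d ^+ k *m y) = coord1 y.
Proof.
move=> hd; elim: k => [|k IH]; first by rewrite expr0 mul1mx.
rewrite exprS -mulmxE -mulmxA -IH /coord1 mul_diag_mx.
by apply: eq_bigr => i /eqP h; rewrite mxE hd // mul1r.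
Qed.

Lemma diag_sq (R : pzRingType) n (d : 'rV[R]_n) :
  (forall i : 'I_n, d 0 i = 1 \/ d 0 i = -1) -> diag_mx d ^+ 2 = 1.
Proof.
move=> h; rewrite expr2 -mulmxE mulmx_diag; apply/matrixP => i j; rewrite !mxE.
by case: (h i) => ->; rewrite ?mulrNN mulr1.
Qed.

Definition dinv (p m n : nat) (P : 'M['F_2]_m) (a : 'cV['F_2]_m * 'cV['F_p]_n) :
  'cV['F_2]_m * 'cV['F_p]_n := (P ^+ (nat_of_ord (coord1 (- a.2))) *m a.1, - a.2).

Lemma dot_group (p m n : nat) (hp : prime p) (P : 'M['F_2]_m) (hP : P ^+ p = 1) :
  group_axioms (@brace_dot p m n P) (0, 0) (@dinv p m n P).
Proof.
have PD : forall a b : 'F_p, P ^+ (nat_of_ord (a + b)%R) = P ^+ a *m P ^+ b.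
  by move=> a b; rewrite mulmxE; apply: Fp_expD.
split.
- move=> [a1 a2] [b1 b2] [c1 c2]; rewrite /brace_dot /=; congr pair; last by rewrite addrA.
  by rewrite coord1D PD mulmxDr mulmxA addrA.
- move=> [x1 x2]; rewrite /brace_dot /= coord10 /= expr0 mul1mx !add0r mulmx0 !addr0.
  by [].
- move=> [a1 a2]; rewrite /brace_dot /dinv /=; split; congr pair.
  + by rewrite mulmxA -PD coord1N subrr /= expr0 mul1mx F2_addxx.
  + by rewrite subrr.
  + by rewrite F2_addxx.
  + by rewrite addNr.
Qed.

Definition cinv (p m n : nat) (E : 'M['F_p]_n) (a : 'cV['F_2]_m * 'cV['F_p]_n) :
  'cV['F_2]_m * 'cV['F_p]_n := (a.1, - (E ^+ (nat_of_ord (coord1 a.1)) *m a.2)).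

Lemma circ_group (p m n : nat) (E : 'M['F_p]_n) (hE : E ^+ 2 = 1) :
  group_axioms (@brace_circ p m n E) (0, 0) (@cinv p m n E).
Proof.
have ED : forall a b : 'F_2, E ^+ (nat_of_ord (a + b)%R) = E ^+ a *m E ^+ b.
  by move=> a b; rewrite mulmxE; apply: Fp_expD.
split.
- move=> [a1 a2] [b1 b2] [c1 c2]; rewrite /brace_circ /=; congr pair; first by rewrite addrA.
  by rewrite coord1D ED mulmxDr mulmxA addrA.
- move=> [x1 x2]; rewrite /brace_circ /= coord10 /= expr0 mul1mx !add0r mulmx0 !addr0.
  by [].
- move=> [a1 a2]; rewrite /brace_circ /cinv /=; split; congr pair.
  + by rewrite F2_addxx.
  + by rewrite mulmxN mulmxA mulmxE -exprD addnn -mul2n exprM hE expr1n mul1mx subrr.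
  + by rewrite F2_addxx.
  + by rewrite addNr.
Qed.

Lemma brace_ax (p m n : nat) (hp : prime p) (P : 'M['F_2]_m) (hP : P ^+ p = 1)
  (E : 'M['F_p]_n) (hEc : forall k y, coord1 (E ^+ k *m y) = coord1 y) :
  forall a b c, brace_circ E a (brace_dot P b c) =
     brace_dot P (brace_dot P (brace_circ E a b) (dinv p m n P a)) (brace_circ E a c).
Proof.
have PD : forall a b : 'F_p, P ^+ (nat_of_ord (a + b)%R) = P ^+ a *m P ^+ b.
  by move=> a b; rewrite mulmxE; apply: Fp_expD.
move=> [a1 a2] [b1 b2] [c1 c2]; rewrite /brace_dot /brace_circ /dinv /=.
rewrite !coord1D coord1N hEc (addrC (coord1 a2) (coord1 b2)) addrK.
rewrite mulmxA -PD addrK; congr pair.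
  by rewrite mulmxDr !addrA; congr (_ + _); rewrite -addrA F2_addxx addr0.
by rewrite mulmxDr [a2 + _ - a2]addrAC subrr add0r addrCA.
Qed.

Lemma F2_opp m' n' (u : 'M['F_2]_(m', n')) : - u = u.
Proof. by apply/eqP; rewrite -subr_eq0 -opprD F2_addxx oppr0. Qed.

Lemma F2_nz (z : 'F_2) : z != 0 -> z = 1.
Proof. by case: z => [[|[|q]] hq] //= _; apply/val_inj. Qed.

Lemma odd_prime_ndvd4 p : prime p -> odd p -> ~~ (p %| 4)%N.
Proof.
move=> hp ho; apply/negP => h; have := @dvdn_leq p 4 isT h; move: hp ho h.
by case: p => [|[|[|[|[|q]]]]].
Qed.

Theorem proposition9p4 (p m n : nat)
  (hp : prime p) (hodd : odd p) (hm : (1 <= m)%N) (hn : (2 <= n)%N)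
  (hdiv : (p %| #|[set M : 'M['F_2]_m | M \in unitmx]|)%N)
  (P : 'M['F_2]_m) (hPunit : P \in unitmx)
  (hPord : P ^+ p = 1%:M /\ (forall k : nat, (0 < k < p)%N -> P ^+ k != 1%:M))
  (d : 'rV['F_p]_n) (hd1 : forall i : 'I_n, val i = 0%N -> d 0 i = 1)
  (hdpm : forall i : 'I_n, d 0 i = 1 \/ d 0 i = -1)
  (hEne : diag_mx d != 1%:M) :
  skew_brace (@brace_dot p m n P) (@brace_circ p m n (diag_mx d)) /\
  ((exists (w : 'F_p) (j : 'I_m),
      exists i : 'I_m, val i = 0%N /\ (P ^+ (nat_of_ord w) - 1%:M) i j != 0) ->
   ~ meta_trivial (@brace_dot p m n P) (@brace_circ p m n (diag_mx d))).
Proof.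
have hP : P ^+ p = 1 by case: hPord.
have hE : diag_mx d ^+ 2 = 1 by apply: diag_sq.
have hEc : forall k y, coord1 (diag_mx d ^+ k *m y) = coord1 y.
  by move=> k y; apply: coord1_diag.
split.
  exists (0, 0), (dinv p m n P); split.
  - exact: dot_group.
  - by exists (0, 0), (@cinv p m n (diag_mx d)); apply: circ_group.
  - exact: brace_ax.
move=> [w [j [i [hi0 hij]]]] MT.
have h0n : (0 < n)%N by apply: leq_trans hn.
pose i0 : 'I_n := Ordinal h0n.
have [k hk] : exists k : 'I_n, d 0 k = -1.
  case: (boolP [exists k, d 0 k == -1]) => [/existsP [k /eqP hk]|hne]; first by exists k.
  exfalso; apply: (negP hEne); apply/eqP/matrixP => a b; rewrite !mxE.
  case: (hdpm a) => [->//|h]; move: hne => /existsPn /(_ a); by rewrite h eqxx.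
pose X := sb_star (brace_dot P) (brace_circ (diag_mx d)) (dinv p m n P)
            (0, - const_mx w) (delta_mx j 0, 0).
pose Y := sb_star (brace_dot P) (brace_circ (diag_mx d)) (dinv p m n P)
            (delta_mx i 0, 0) (0, delta_mx k 0).
have HX : X = ((P ^+ w + 1) *m delta_mx j 0, 0).
  rewrite /X /sb_star /brace_dot /brace_circ /dinv /=.
  rewrite !mulmx0 !oppr0 coord10 /= expr0 !mul1mx !addr0 !add0r opprK subrr coord10 /=.
  rewrite expr0 mul1mx (@coord1E _ _ i0) // mxE mulmxDl mul1mx.
  by [].
have HY : Y = (0, diag_mx d *m delta_mx k 0 - delta_mx k 0).
  have c1 : coord1 (delta_mx i 0 : 'cV['F_2]_m) = 1 by rewrite (@coord1E _ _ i _ hi0) mxE !eqxx.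
  rewrite /Y /sb_star /brace_dot /brace_circ /dinv /=.
  rewrite !oppr0 !add0r !addr0 coord10 /= expr0 !mul1mx ?mulmx0 ?addr0 ?add0r F2_addxx c1 /= expr1.
  by [].
have := MT (0, 0) (dinv p m n P) (@dot_group p m n hp P hP) X Y (Ap_gen _ _ _ _ _ _) (Ap_gen _ _ _ _ _ _).
have cX : coord1 ((P ^+ w + 1) *m delta_mx j 0) = 1.
  rewrite (@coord1E _ _ i _ hi0) -colE mxE; apply: F2_nz.
  by move: hij; rewrite F2_opp.
rewrite HX HY /brace_dot /brace_circ /= => /(congr1 snd) /=.
rewrite cX /= expr1 !add0r => /(congr1 (fun M : 'cV['F_p]_n => M k 0)).
rewrite !mul_diag_mx !mxE hk eqxx /= => h.
have h4 : (4%:R : 'F_p) = 0.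
  have -> : (4%:R : 'F_p) = -1 * (-1 * 1 - 1) - (-1 * 1 - 1) by ring.
  by rewrite h subrr.
move/eqP: h4; rewrite -(dvdn_pcharf (pchar_Fp hp)); apply/negP.
exact: odd_prime_ndvd4.
Qed.
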